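(* The set of singular points of the collinearity variety $\tilde{C}_B=0$ remains invariant under Euclidean motions, i.e. under maps $(\mathbf{k}'_1,\dots,\mathbf{k}'_6)\mapsto(\mathbf{R}\mathbf{k}'_1+\mathbf{t},\dots,\mathbf{R}\mathbf{k}'_6+\mathbf{t})$ with $\mathbf{R}\in SO(2)$ and $\mathbf{t}\in\mathbb{R}^2$. Moreover, a point of $\tilde{C}_B=0$ is a singular point if and only if $\mathbf{k}'_1=\mathbf{k}'_2=\mathbf{k}'_3$.
   Context: A configuration is $K'=(\mathbf{k}'_1,\dots,\mathbf{k}'_6)$ with $\mathbf{k}'_i=(c_i,d_i)^T\in\mathbb{R}^2$, viewed as a point of $\mathbb{R}^{12}$. The given platform has anchor points (in its moving frame) $(0,0),(x_5,0),(x_6,y_6)$ with real design parameters $x_5\neq0$, $x_6$, $y_6$. Define $C_B=\det\begin{pmatrix}1&1&1\\ c_1&c_2&c_3\\ d_1&d_2&d_3\end{pmatrix}$, $E_P=\|\mathbf{k}'_5-\mathbf{k}'_4\|^2-x_5^2$, $F_3=(c_5-c_4)x_6+(d_4-d_5)y_6+(c_4-c_6)x_5$, $F_4=(d_5-d_4)x_6+(c_5-c_4)y_6+(d_4-d_6)x_5$. The variety $\tilde{C}_B=0$ is the common zero set of $C_B,E_P,F_3,F_4$ in $\mathbb{R}^{12}$ (configurations with collinear base points whose platform is a Euclidean image of the given platform). A singular point of $\tilde{C}_B=0$ is a point of it at which the gradients of $C_B,E_P,F_3,F_4$ with respect to $c_1,\dots,c_6,d_1,\dots,d_6$ are linearly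 dependent. *)

(* Defs.v *)
From Stdlib Require Import Reals.
From Coquelicot Require Import Coquelicot.
Open Scope R_scope.

(* A configuration K' = (k'_1,...,k'_6), k'_i = (c_i, d_i), is given by two
   coordinate functions c d : nat -> R; only the indices 1..6 are used. *)

Definition upd (f : nat -> R) (i : nat) (t : R) : nat -> R :=
  fun j => if Nat.eqb j i then t else f j.

Definition cfun := (nat -> R) -> (nat -> R) -> R.

Definition dC (P : cfun) (c d : nat -> R) (i : nat) : R :=
  Derive (fun t => P (upd c i t) d) (c i).
Definition dD (P : cfun) (c d : nat -> R) (i : nat) : R :=
  Derive (fun t => P c (upd d i t)) (d i).

(* C_B = det [[1,1,1],[c1,c2,c3],[d1,d2,d3]] (cofactor expansion along row 1) *)
Definition C_B : cfun := fun c d =>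
  (c 2%nat * d 3%nat - c 3%nat * d 2%nat)
  - (c 1%nat * d 3%nat - c 3%nat * d 1%nat)
  + (c 1%nat * d 2%nat - c 2%nat * d 1%nat).

Definition E_P (x5 : R) : cfun := fun c d =>
  (c 5%nat - c 4%nat) ^ 2 + (d 5%nat - d 4%nat) ^ 2 - x5 ^ 2.

Definition F_3 (x5 x6 y6 : R) : cfun := fun c d =>
  (c 5%nat - c 4%nat) * x6 + (d 4%nat - d 5%nat) * y6 + (c 4%nat - c 6%nat) * x5.

Definition F_4 (x5 x6 y6 : R) : cfun := fun c d =>
  (d 5%nat - d 4%nat) * x6 + (c 5%nat - c 4%nat) * y6 + (d 4%nat - d 6%nat) * x5.

Definition on_variety (x5 x6 y6 : R) (c d : nat -> R) : Prop :=
  C_B c d = 0 /\ E_P x5 c d = 0 /\ F_3 x5 x6 y6 c d = 0 /\ F_4 x5 x6 y6 c d = 0.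

Definition gradients_dependent (P1 P2 P3 P4 : cfun) (c d : nat -> R) : Prop :=
  exists l1 l2 l3 l4 : R,
    ~ (l1 = 0 /\ l2 = 0 /\ l3 = 0 /\ l4 = 0) /\
    forall i : nat, (1 <= i <= 6)%nat ->
      l1 * dC P1 c d i + l2 * dC P2 c d i + l3 * dC P3 c d i + l4 * dC P4 c d i = 0 /\
      l1 * dD P1 c d i + l2 * dD P2 c d i + l3 * dD P3 c d i + l4 * dD P4 c d i = 0.

Definition singular_point (x5 x6 y6 : R) (c d : nat -> R) : Prop :=
  on_variety x5 x6 y6 c d /\
  gradients_dependent C_B (E_P x5) (F_3 x5 x6 y6) (F_4 x5 x6 y6) c d.

(* R = [[r11, r12], [r21, r22]] lies in SO(2): R^T R = I and det R = 1 *)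
Definition in_SO2 (r11 r12 r21 r22 : R) : Prop :=
  r11 * r11 + r21 * r21 = 1 /\ r12 * r12 + r22 * r22 = 1 /\
  r11 * r12 + r21 * r22 = 0 /\ r11 * r22 - r12 * r21 = 1.

Definition motion_c (r11 r12 t1 : R) (c d : nat -> R) : nat -> R :=
  fun i => r11 * c i + r12 * d i + t1.
Definition motion_d (r21 r22 t2 : R) (c d : nat -> R) : nat -> R :=
  fun i => r21 * c i + r22 * d i + t2.

(* Main.v *)
Require Import Defs.
From Stdlib Require Import Reals Lra Lia.
From Coquelicot Require Import Coquelicot.
Open Scope R_scope.

Ltac dtac := unfold dC, dD; apply is_derive_unique; unfold C_B, E_P, F_3, F_4, upd; cbn [Nat.eqb];
  auto_derive; [trivial | ring].

Lemma dCB c d i : (1 <= i <= 6)%nat ->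
  dC C_B c d i = match i with 1%nat => d 2%nat - d 3%nat | 2%nat => d 3%nat - d 1%nat | 3%nat => d 1%nat - d 2%nat | _ => 0 end /\
  dD C_B c d i = match i with 1%nat => c 3%nat - c 2%nat | 2%nat => c 1%nat - c 3%nat | 3%nat => c 2%nat - c 1%nat | _ => 0 end.
Proof. intros Hi; destruct i as [|[|[|[|[|[|[|i]]]]]]]; try lia; split; dtac. Qed.

Lemma dEP x5 c d i : (1 <= i <= 6)%nat ->
  dC (E_P x5) c d i = match i with 4%nat => -2*(c 5%nat - c 4%nat) | 5%nat => 2*(c 5%nat - c 4%nat) | _ => 0 end /\
  dD (E_P x5) c d i = match i with 4%nat => -2*(d 5%nat - d 4%nat) | 5%nat => 2*(d 5%nat - d 4%nat) | _ => 0 end.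
Proof. intros Hi; destruct i as [|[|[|[|[|[|[|i]]]]]]]; try lia; split; dtac. Qed.

Lemma dF3 x5 x6 y6 c d i : (1 <= i <= 6)%nat ->
  dC (F_3 x5 x6 y6) c d i = match i with 4%nat => x5 - x6 | 5%nat => x6 | 6%nat => - x5 | _ => 0 end /\
  dD (F_3 x5 x6 y6) c d i = match i with 4%nat => y6 | 5%nat => - y6 | _ => 0 end.
Proof. intros Hi; destruct i as [|[|[|[|[|[|[|i]]]]]]]; try lia; split; dtac. Qed.

Lemma dF4 x5 x6 y6 c d i : (1 <= i <= 6)%nat ->
  dC (F_4 x5 x6 y6) c d i = match i with 4%nat => - y6 | 5%nat => y6 | _ => 0 end /\
  dD (F_4 x5 x6 y6) c d i = match i with 4%nat => x5 - x6 | 5%nat => x6 | 6%nat => - x5 | _ => 0 end.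
Proof. intros Hi; destruct i as [|[|[|[|[|[|[|i]]]]]]]; try lia; split; dtac. Qed.

Lemma grads x5 x6 y6 c d i : (1 <= i <= 6)%nat -> forall l1 l2 l3 l4,
  (l1 * dC C_B c d i + l2 * dC (E_P x5) c d i + l3 * dC (F_3 x5 x6 y6) c d i + l4 * dC (F_4 x5 x6 y6) c d i = 0 /\
   l1 * dD C_B c d i + l2 * dD (E_P x5) c d i + l3 * dD (F_3 x5 x6 y6) c d i + l4 * dD (F_4 x5 x6 y6) c d i = 0) <->
  (l1 * match i with 1%nat => d 2%nat - d 3%nat | 2%nat => d 3%nat - d 1%nat | 3%nat => d 1%nat - d 2%nat | _ => 0 end
   + l2 * match i with 4%nat => -2*(c 5%nat - c 4%nat) | 5%nat => 2*(c 5%nat - c 4%nat) | _ => 0 end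
   + l3 * match i with 4%nat => x5 - x6 | 5%nat => x6 | 6%nat => - x5 | _ => 0 end
   + l4 * match i with 4%nat => - y6 | 5%nat => y6 | _ => 0 end = 0 /\
   l1 * match i with 1%nat => c 3%nat - c 2%nat | 2%nat => c 1%nat - c 3%nat | 3%nat => c 2%nat - c 1%nat | _ => 0 end
   + l2 * match i with 4%nat => -2*(d 5%nat - d 4%nat) | 5%nat => 2*(d 5%nat - d 4%nat) | _ => 0 end
   + l3 * match i with 4%nat => y6 | 5%nat => - y6 | _ => 0 end
   + l4 * match i with 4%nat => x5 - x6 | 5%nat => x6 | 6%nat => - x5 | _ => 0 end = 0).
Proof.
  intros Hi l1 l2 l3 l4.
  destruct (dCB c d i Hi) as [-> ->]. destruct (dEP x5 c d i Hi) as [-> ->].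
  destruct (dF3 x5 x6 y6 c d i Hi) as [-> ->]. destruct (dF4 x5 x6 y6 c d i Hi) as [-> ->].
  tauto.
Qed.

Lemma charac x5 x6 y6 c d : x5 <> 0 -> on_variety x5 x6 y6 c d ->
  (singular_point x5 x6 y6 c d <->
       (c 1%nat = c 2%nat /\ d 1%nat = d 2%nat /\
        c 2%nat = c 3%nat /\ d 2%nat = d 3%nat)).
Proof.
  intros hx5 Hv. unfold singular_point. split.
  - intros [_ [l1 [l2 [l3 [l4 [Hn H]]]]]].
    assert (G : forall i, (1 <= i <= 6)%nat -> _) by (intros i Hi; exact (proj1 (grads x5 x6 y6 c d i Hi l1 l2 l3 l4) (H i Hi))).
    destruct (G 1%nat ltac:(lia)) as [A1 B1].
    destruct (G 2%nat ltac:(lia)) as [A2 B2].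
    destruct (G 3%nat ltac:(lia)) as [A3 B3].
    destruct (G 5%nat ltac:(lia)) as [A5 B5].
    destruct (G 6%nat ltac:(lia)) as [A6 B6].
    assert (l3 = 0). { assert (l3 * x5 = 0) by lra. destruct (Rmult_integral _ _ H0); [auto|contradiction]. }
    assert (l4 = 0). { assert (l4 * x5 = 0) by lra. destruct (Rmult_integral _ _ H1); [auto|contradiction]. }
    subst l3 l4.
    assert (l2 = 0).
    { destruct (Req_dec l2 0) as [e|ne]; [exact e|].
      assert (l2 * (c 5%nat - c 4%nat) = 0) by lra.
      assert (l2 * (d 5%nat - d 4%nat) = 0) by lra.
      destruct (Rmult_integral _ _ H0) as [|E1]; [contradiction|].
      destruct (Rmult_integral _ _ H1) as [|E2]; [contradiction|].
      destruct Hv as [_ [HE _]]. unfold E_P in HE. rewrite E1, E2 in HE.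
      exfalso. apply hx5. nra. }
    subst l2.
    assert (l1 <> 0) by lra.
    assert (e1 : d 2%nat - d 3%nat = 0) by (apply (Rmult_integral _ _) in A1 || idtac; nra).
    assert (e2 : d 3%nat - d 1%nat = 0) by nra.
    assert (e3 : c 3%nat - c 2%nat = 0) by nra.
    assert (e4 : c 1%nat - c 3%nat = 0) by nra.
    lra.
  - intros E. split; [exact Hv|]. exists 1, 0, 0, 0. split; [lra|].
    intros i Hi. apply (grads x5 x6 y6 c d i Hi).
    destruct E as [E1 [E2 [E3 E4]]].
    destruct i as [|[|[|[|[|[|[|i]]]]]]]; try lia; split; rewrite ?E1, ?E2, ?E3, ?E4; ring.
Qed.

Theorem theorem10 (x5 x6 y6 : R) (hx5 : x5 <> 0) :
  (forall (r11 r12 r21 r22 t1 t2 : R) (c d : nat -> R),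
      in_SO2 r11 r12 r21 r22 ->
      (singular_point x5 x6 y6 c d <->
       singular_point x5 x6 y6 (motion_c r11 r12 t1 c d) (motion_d r21 r22 t2 c d)))
  /\
  (forall c d : nat -> R,
      on_variety x5 x6 y6 c d ->
      (singular_point x5 x6 y6 c d <->
       (c 1%nat = c 2%nat /\ d 1%nat = d 2%nat /\
        c 2%nat = c 3%nat /\ d 2%nat = d 3%nat))).
Proof.
  split; [|intros; apply charac; auto].
  intros r11 r12 r21 r22 t1 t2 c d [e1 [e2 [e3 e4]]].
  assert (h22 : r22 = r11).
  { replace r22 with (r22 * (r11*r11 + r21*r21) - r11 * (r11*r22 - r12*r21) + r11 - r21 * (r11*r12 + r21*r22)) by (rewrite e1, e4, e3; ring). ring. }
  assert (h12 : r12 = - r21).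
  { replace r12 with (r12 * (r11*r11 + r21*r21) + r21 * (r11*r22 - r12*r21) - r21 - r11 * (r11*r12 + r21*r22)) by (rewrite e1, e4, e3; ring). ring. }
  subst r22 r12. clear e2 e3 e4.
  set (a := r11) in *. set (b := r21) in *.
  assert (HV : on_variety x5 x6 y6 c d <-> on_variety x5 x6 y6 (motion_c a (-b) t1 c d) (motion_d b a t2 c d)).
  { unfold on_variety, C_B, E_P, F_3, F_4, motion_c, motion_d.
    set (c1 := c 1%nat); set (c2 := c 2%nat); set (c3 := c 3%nat); set (c4 := c 4%nat); set (c5 := c 5%nat); set (c6 := c 6%nat).
    set (d1 := d 1%nat); set (d2 := d 2%nat); set (d3 := d 3%nat); set (d4 := d 4%nat); set (d5 := d 5%nat); set (d6 := d 6%nat).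
    set (CB := c2 * d3 - c3 * d2 - (c1 * d3 - c3 * d1) + (c1 * d2 - c2 * d1)).
    set (EP := (c5 - c4) ^ 2 + (d5 - d4) ^ 2 - x5 ^ 2).
    set (F3 := (c5 - c4) * x6 + (d4 - d5) * y6 + (c4 - c6) * x5).
    set (F4 := (d5 - d4) * x6 + (c5 - c4) * y6 + (d4 - d6) * x5).
    match goal with |- _ <-> (?A = 0 /\ ?B = 0 /\ ?C = 0 /\ ?D = 0) =>
      replace A with CB by (transitivity ((a*a+b*b)*CB); [rewrite e1; ring | unfold CB; ring]);
      replace B with EP by (transitivity ((a*a+b*b)*((c5-c4)^2+(d5-d4)^2) - x5^2); [rewrite e1; unfold EP; ring | ring]);
      replace C with (a * F3 - b * F4) by (unfold F3, F4; ring);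
      replace D with (b * F3 + a * F4) by (unfold F3, F4; ring) end.
    split; intros [H1 [H2 [H3 H4]]]; repeat split; auto.
    - rewrite H3, H4; ring.
    - rewrite H3, H4; ring.
    - assert (Z : F3 = a * (a * F3 - b * F4) + b * (b * F3 + a * F4)).
      { transitivity ((a*a+b*b)*F3). rewrite e1; ring. ring. }
      rewrite Z, H3, H4; ring.
    - assert (Z : F4 = a * (b * F3 + a * F4) - b * (a * F3 - b * F4)).
      { transitivity ((a*a+b*b)*F4). rewrite e1; ring. ring. }
      rewrite Z, H3, H4; ring. }
  assert (HE : forall i j, (c i = c j /\ d i = d j) <->
     (motion_c a (-b) t1 c d i = motion_c a (-b) t1 c d j /\ motion_d b a t2 c d i = motion_d b a t2 c d j)).
  { intros i j; unfold motion_c, motion_d; split; intros [H1 H2].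
    - rewrite H1, H2; auto.
    - assert (X : a * (c i - c j) - b * (d i - d j) = 0) by lra.
      assert (Y : b * (c i - c j) + a * (d i - d j) = 0) by lra.
      split.
      + assert (Z : c i - c j = a * (a * (c i - c j) - b * (d i - d j)) + b * (b * (c i - c j) + a * (d i - d j))).
        { transitivity ((a*a+b*b)*(c i - c j)). rewrite e1; ring. ring. }
        rewrite X, Y in Z. lra.
      + assert (Z : d i - d j = a * (b * (c i - c j) + a * (d i - d j)) - b * (a * (c i - c j) - b * (d i - d j))).
        { transitivity ((a*a+b*b)*(d i - d j)). rewrite e1; ring. ring. }
        rewrite X, Y in Z. lra. }
  split; intro S.
  - assert (V := proj1 S). assert (V' := proj1 HV V).
    apply (charac _ _ _ _ _ hx5 V'). apply (charac _ _ _ _ _ hx5 V) in S.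
    destruct S as [s1 [s2 [s3 s4]]].
    destruct (proj1 (HE 1%nat 2%nat) (conj s1 s2)). destruct (proj1 (HE 2%nat 3%nat) (conj s3 s4)). tauto.
  - assert (V' := proj1 S). assert (V := proj2 HV V').
    apply (charac _ _ _ _ _ hx5 V). apply (charac _ _ _ _ _ hx5 V') in S.
    destruct S as [s1 [s2 [s3 s4]]].
    destruct (proj2 (HE 1%nat 2%nat) (conj s1 s2)). destruct (proj2 (HE 2%nat 3%nat) (conj s3 s4)). tauto.
Qed.
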